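(* If $a$ and $m$ are integers with $m>0$, then $m$ divides $(a^m-a)\,(m-1)!$. *)

(* Defs.v *)
From mathcomp Require Import all_boot all_order all_algebra.

(* Main.v *)
Require Import Defs.
From mathcomp Require Import all_boot all_order all_algebra.
From mathcomp Require Import zify.
Import GRing.Theory Num.Theory.
Local Open Scope ring_scope.

Lemma fermatz (a : int) p : prime p -> (a ^+ p = a %[mod p])%Z.
Proof.
move=> pP.
have p0 : (p%:Z != 0) by case: p pP.
have := modz_ge0 a p0; case E: (a %% p)%Z => [n|n] // _.
rewrite -modzXm E -natz -natrX natz modz_nat (fermat_little n pP) -modz_nat -E modz_mod.
by rewrite E natz.
Qed.

Lemma two_fact (i j n : nat) : (0 < i)%N -> (i < j)%N -> (j <= n)%N -> (i * j %| n`!)%N.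
Proof.
move=> i0 ij; elim: n => [|n IH] jn; first by move: jn; rewrite leqn0 => /eqP E; move: ij; rewrite E.
rewrite factS; case: (ltnP j n.+1) => H.
  by apply: dvdn_mull; apply: IH.
have -> : j = n.+1 by apply/eqP; rewrite eqn_leq jn H.
rewrite mulnC; apply: dvdn_mul => //; apply: dvdn_fact; rewrite i0 /=.
by have := leq_trans ij jn; rewrite ltnS.
Qed.

Lemma comp_fact m : (1 < m)%N -> ~~ prime m -> m != 4%N -> (m %| (m.-1)`!)%N.
Proof.
move=> m1 np m4.
set d := pdiv m.
have dP : prime d by apply: pdiv_prime.
have dm : (d %| m)%N by apply: pdiv_dvd.
set k := (m %/ d)%N.
have Em : m = (k * d)%N by rewrite divnK.
have d1 : (1 < d)%N by apply: prime_gt1.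
have dd : (d ^ 2 <= m)%N.
  rewrite leqNgt; apply/negP => H; move/negP: np; apply.
  by apply: ltn_pdiv2_prime => //; apply: ltnW.
have dk : (d <= k)%N.
  by move: dd; rewrite Em expnS expn1 leq_mul2r; case/orP => // /eqP E; rewrite E in d1.
case: (ltnP d k) => H.
  rewrite {1}Em mulnC; apply: two_fact => //; first exact: ltnW.
  rewrite Em; nia.
have Ek : k = d by apply/eqP; rewrite eqn_leq H dk.
have d2 : (2 < d)%N.
  rewrite ltn_neqAle d1 andbT; apply/negP => /eqP E; move: m4; rewrite Em Ek -E.
  by [].
apply: (@dvdn_trans (d * (2 * d))%N).
  by rewrite Em Ek mulnA [(d * 2)%N]mulnC -mulnA dvdn_mull.
apply: two_fact; rewrite ?Em ?Ek; nia.
Qed.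

Theorem mainTheorem11 (a : int) (m : nat) (hm : (0 < m)%N) :
  (m%:Z %| (a ^+ m - a) * ((m.-1)`!)%:Z)%Z.
Proof.
case: (ltnP 1 m) => m1; last first.
  by have -> : m = 1%N by apply/eqP; rewrite eqn_leq m1 hm.
case pm: (prime m).
  by apply: dvdz_mulr; rewrite -eqz_mod_dvd; apply/eqP; apply: fermatz.
case: (eqVneq m 4%N) => [->|m4]; last first.
  apply: dvdz_mull; rewrite dvdzE /=; apply: comp_fact => //; by rewrite pm.
have -> : (4%:Z = 2 * 2)%R by [].
apply: dvdz_mul => //.
rewrite -eqz_mod_dvd; apply/eqP.
have -> : (4 = 2 * 2)%N by [].
rewrite exprM -modzXm (@fermatz a 2 isT) modzXm.
exact: fermatz.
Qed.
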